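(* Let $\sigma_w^2=0$. Then $(\alpha,\sigma^2)=(1,0)$ is a fixed point of the complex SE map, i.e. $\psi_1(1,0)=1$ and $\psi_2(1,0;\delta,0)=0$ for every $\delta>0$. Moreover: (a) if $\delta>2$, there exist constants $\epsilon_1>0$, $\epsilon_2>0$ such that for every real $\alpha_0\in(1-\epsilon_1,1)$ and every $\sigma_0^2\in(0,\epsilon_2)$ the SE sequences satisfy $\alpha_t\to1$ and $\sigma_t^2\to0$; (b) if $\delta<2$, the SE sequences cannot converge to $(1,0)$ unless $(\alpha_0,\sigma_0^2)=(1,0)$.
   Context: Complex state evolution (SE). Fix $\delta>0$ and $\sigma_w^2\ge0$. For $\alpha\in\mathbb{C}$ and $\sigma^2\ge0$ with $(\alpha,\sigma^2)\neq(0,0)$, let $\theta_\alpha$ be the argument of $\alpha$ ($\theta_0:=0$) and define $$\psi_1(\alpha,\sigma^2)=e^{\mathrm{i}\theta_\alpha}\int_0^{\pi/2}\frac{|\alpha|\sin^2\theta}{(|\alpha|^2\sin^2\theta+\sigma^2)^{1/2}}\,d\theta,$$ $$\psi_2(\alpha,\sigma^2;\delta,\sigma_w^2)=\frac4\delta\Big(|\alpha|^2+\sigma^2+1-\int_0^{\pi/2}\frac{2|\alpha|^2\sin^2\theta+\sigma^2}{(|\alpha|^2\sin^2\theta+\sigma^2)^{1/2}}\,d\theta\Big)+4\sigma_w^2 .$$ Given $(\alpha_0,\sigma_0^2)$, the SE sequences are defined by $\alpha_{t+1}=\psi_1(\alpha_t,\sigma_t^2)$, $\sigma_{t+1}^2=\psi_2(\alpha_t,\sigma_t^2;\delta,\sigma_w^2)$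 for $t\ge0$. *)

(* Defs.v *)
From Stdlib Require Import Reals Lra ClassicalEpsilon.
Open Scope R_scope.

Definition Cpx : Type := (R * R)%type.
Definition Cmod (z : Cpx) : R := sqrt (fst z ^ 2 + snd z ^ 2).
Definition Csub (z w : Cpx) : Cpx := (fst z - fst w, snd z - snd w).
Definition Cscale (r : R) (z : Cpx) : Cpx := (r * fst z, r * snd z).
Definition Cofreal (x : R) : Cpx := (x, 0).

(* e^{i theta_alpha}: the unit complex number alpha/|alpha|, and 1 for alpha = 0
   (theta_0 := 0). *)
Definition phase (z : Cpx) : Cpx :=
  if Req_EM_T (Cmod z) 0 then (1, 0) else (fst z / Cmod z, snd z / Cmod z).

(* Riemann integral of f over [a,b] (value of RiemannInt when f is Riemann
   integrable; 0 otherwise -- never used in the relevant cases). *)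
Definition Rint (f : R -> R) (a b : R) : R :=
  match excluded_middle_informative
          (exists I, exists pr : Riemann_integrable f a b, RiemannInt pr = I) with
  | left H => proj1_sig (constructive_indefinite_description _ H)
  | right _ => 0
  end.

Definition psi1 (a : Cpx) (s2 : R) : Cpx :=
  Cscale
    (Rint (fun th => Cmod a * sin th ^ 2 / sqrt (Cmod a ^ 2 * sin th ^ 2 + s2))
          0 (PI / 2))
    (phase a).

Definition psi2 (a : Cpx) (s2 delta sw2 : R) : R :=
  4 / delta *
    (Cmod a ^ 2 + s2 + 1
     - Rint (fun th => (2 * Cmod a ^ 2 * sin th ^ 2 + s2)
                       / sqrt (Cmod a ^ 2 * sin th ^ 2 + s2))
            0 (PI / 2))
  + 4 * sw2.

Fixpoint se (delta sw2 : R) (a0 : Cpx) (s0 : R) (t : nat) : Cpx * R :=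
  match t with
  | O => (a0, s0)
  | S t' => let p := se delta sw2 a0 s0 t' in
            (psi1 (fst p) (snd p), psi2 (fst p) (snd p) delta sw2)
  end.

(* Main.v *)
Require Import Defs.
From Stdlib Require Import Reals.
Open Scope R_scope.
From Stdlib Require Import Lra Psatz Lia ClassicalEpsilon.
From Coquelicot Require Coquelicot.

Module Aux.
Import Coquelicot.Coquelicot.

Lemma Rint_RInt f : ex_RInt f 0 (PI/2) -> Rint f 0 (PI/2) = RInt f 0 (PI/2).
Proof.
  intros Hex. unfold Rint. destruct excluded_middle_informative as [H|H].
  - destruct (constructive_indefinite_description _ H) as [I [pr HI]]; simpl.
    rewrite <- HI. symmetry; apply RInt_Reals.
  - exfalso; apply H. exists (RiemannInt (ex_RInt_Reals_0 _ _ _ Hex)).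
    exists (ex_RInt_Reals_0 _ _ _ Hex). reflexivity.
Qed.

Lemma RInt_by_deriv (F f : R -> R) a b v :
  a <= b ->
  (forall x, a <= x <= b -> is_derive F x (f x)) ->
  (forall x, a <= x <= b -> continuous f x) -> F b - F a = v -> RInt f a b = v.
Proof.
  intros ab H1 H2 H3. apply is_RInt_unique.
  rewrite <- H3. apply (is_RInt_derive F f a b).
  - intros x Hx. rewrite Rmin_left, Rmax_right in Hx by lra. auto.
  - intros x Hx. rewrite Rmin_left, Rmax_right in Hx by lra. auto.
Qed.

Lemma PI2_pos : 0 <= PI/2.
Proof. pose proof PI_RGT_0; lra. Qed.

Lemma int_sin : RInt sin 0 (PI/2) = 1.
Proof.
  apply (RInt_by_deriv (fun x => - cos x)). apply PI2_pos.
  - intros x _. auto_derive; auto. ring.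
  - intros x _. apply (@ex_derive_continuous R_AbsRing R_NormedModule). auto_derive; auto.
  - rewrite cos_PI2, cos_0. ring.
Qed.

Ltac cont := apply (@ex_derive_continuous R_AbsRing R_NormedModule); auto_derive.

Lemma sqrt1r r : 0 < r -> 1 < sqrt (1 + r) /\ sqrt (1+r) * sqrt (1+r) = 1 + r.
Proof.
  intros Hr. split.
  - rewrite <- sqrt_1 at 1. apply sqrt_lt_1; lra.
  - apply sqrt_sqrt; lra.
Qed.

Lemma int_log r : 0 < r ->
  RInt (fun t => r * sin t / (sin t ^ 2 + r)) 0 (PI/2)
  = r * (ln (sqrt (1+r) + 1) - ln (sqrt (1+r) - 1)) / (2 * sqrt (1+r)).
Proof.
  intros Hr. destruct (sqrt1r r Hr) as [Hc Hc2]. set (c := sqrt (1+r)) in *.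
  assert (Hcos : forall t, -1 <= cos t <= 1) by apply COS_bound.
  assert (Hs : forall t, sin t ^ 2 + r = (c - cos t) * (c + cos t)).
  { intros t. pose proof (sin2_cos2 t). unfold Rsqr in *. simpl. nra. }
  apply (RInt_by_deriv (fun t => r * (ln (c - cos t) - ln (c + cos t)) / (2 * c))).
  apply PI2_pos.
  - intros x _. specialize (Hcos x). auto_derive.
    + split; [lra|split; [lra|auto]].
    + rewrite (Hs x). field. repeat split; lra.
  - intros x _. specialize (Hcos x). cont. apply Rgt_not_eq. pose proof (pow2_ge_0 (sin x)). simpl in *. nra.
  - rewrite cos_PI2, cos_0. replace (c - 0) with (c+0) by ring. field. lra.
Qed.

Definition Sq r x := sqrt (x ^ 2 + r).
Definition psi r x := (Sq r x - x) ^ 2 / Sq r x.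

Lemma Sq_pos r x : 0 < r -> 0 < Sq r x.
Proof. intros. unfold Sq. apply sqrt_lt_R0. pose proof (pow2_ge_0 x). lra. Qed.
Lemma Sq_sq r x : 0 < r -> Sq r x * Sq r x = x ^ 2 + r.
Proof. intros. unfold Sq. apply sqrt_sqrt. pose proof (pow2_ge_0 x). lra. Qed.

Lemma int_psicos r : 0 < r ->
  RInt (fun t => psi r (sin t) * cos t) 0 (PI/2) = sqrt (1+r) - 1.
Proof.
  intros Hr.
  apply (RInt_by_deriv (fun t => - (Sq r (sin t) - sin t) ^ 2 / 2)).
  apply PI2_pos.
  - intros x _. unfold psi, Sq. auto_derive.
    + pose proof (pow2_ge_0 (sin x)). simpl in *; nra.
    + replace (sin x * (sin x * 1)) with (sin x ^ 2) by ring. fold (Sq r (sin x)).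
      pose proof (Sq_pos r (sin x) Hr). pose proof (Sq_sq r (sin x) Hr).
      set (S := Sq r (sin x)) in *. field. lra.
  - intros x _. unfold psi, Sq. cont. pose proof (pow2_ge_0 (sin x)); simpl in *;
    repeat split; try apply Rgt_not_eq; try apply sqrt_lt_R0; nra.
  - rewrite sin_PI2, sin_0. unfold Sq.
    replace (1 ^ 2 + r) with (1 + r) by ring. replace (0 ^ 2 + r) with r by ring.
    destruct (sqrt1r r Hr) as [_ Hc2]. pose proof (sqrt_sqrt r (Rlt_le _ _ Hr)).
    replace ((sqrt r - 0)^2) with (sqrt r * sqrt r) by ring. rewrite H.
    simpl. nra.
Qed.


Lemma sinlb x : sin_lb x = x - x^3/6 + x^5/120 - x^7/5040.
Proof.
  unfold sin_lb, sin_approx, sin_term. cbn [sum_f_R0]. rewrite !INR_IZR_INZ.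
  vm_compute (Z.of_nat _). simpl Nat.mul. simpl Nat.add. field.
Qed.
Lemma PI_lt_347 : PI < 347/100.
Proof. destruct (PI_ineq 1) as [_ H]. unfold tg_alt, PI_tg in H. simpl in H.
 replace (1+1+1+1+1) with 5 in H by ring. replace (1+1+1) with 3 in H by ring. lra. Qed.
Lemma sin_lin x : 0 <= x <= PI/2 -> 11/20 * x <= sin x.
Proof.
  intros Hx. pose proof PI_lt_347. pose proof PI_RGT_0.
  destruct (SIN x) as [Hs _]; try lra. rewrite sinlb in Hs.
  assert (x <= 174/100) by lra.
  assert (0 <= x) by lra.
  assert (0 <= x^2 <= 3.03) by (split; nra).
  assert (0 <= x^4 <= 9.2) by (split; nra).
  assert (x^6 <= 28) by nra.
  assert (11/20 <= 1 - x^2/6 + x^4/120 - x^6/5040) by nra.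
  nra.
Qed.

Lemma int_psilin r : 0 < r ->
  RInt (fun t => psi r (11/20 * t)) 0 (PI/2) =
  20/11 * (r / 2 - (Sq r (11/20 * (PI/2)) - 11/20 * (PI/2)) ^ 2 / 2).
Proof.
  intros Hr. pose proof PI_RGT_0.
  apply (RInt_by_deriv (fun t => - (20/11) * (Sq r (11/20 * t) - 11/20 * t) ^ 2 / 2)).
  apply PI2_pos.
  - intros x _. unfold psi, Sq. auto_derive.
    + pose proof (pow2_ge_0 (11/20 * x)). simpl in *; nra.
    + set (u := 11/20 * x). 
      replace (u * (u * 1)) with (u ^ 2) by ring.
      fold (Sq r u).
      pose proof (Sq_pos r u Hr). pose proof (Sq_sq r u Hr).
      set (S := Sq r u) in *. field. lra.
  - intros x _. unfold psi, Sq. cont. pose proof (pow2_ge_0 (11/20 * x)); simpl in *;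
    repeat split; try apply Rgt_not_eq; try apply sqrt_lt_R0; nra.
  - replace (11/20 * 0) with 0 by ring. unfold Sq at 2.
    replace (0 ^ 2 + r) with r by ring.
    pose proof (sqrt_sqrt r (Rlt_le _ _ Hr)).
    replace ((sqrt r - 0)^2) with (sqrt r * sqrt r) by ring. rewrite H0. field.
Qed.

Lemma Sq_ge r x : 0 < r -> 0 <= x -> x <= Sq r x /\ sqrt r <= Sq r x.
Proof.
  intros Hr Hx. unfold Sq. split.
  - rewrite <- (sqrt_pow2 x Hx) at 1. apply sqrt_le_1; try lra; pose proof (pow2_ge_0 x); lra.
  - apply sqrt_le_1; try lra; pose proof (pow2_ge_0 x); lra.
Qed.

Lemma Sq_mono r a b : 0 < r -> 0 <= a <= b -> Sq r b - b <= Sq r a - a.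
Proof.
  intros Hr Hab. destruct (Sq_ge r a Hr) as [Ha1 Ha2]; try lra.
  destruct (Sq_ge r b Hr) as [Hb1 Hb2]; try lra.
  pose proof (Sq_sq r a Hr). pose proof (Sq_sq r b Hr).
  pose proof (Sq_pos r a Hr). pose proof (Sq_pos r b Hr).
  set (A := Sq r a) in *. set (B := Sq r b) in *. simpl in *.
  assert (B - A <= b - a); [|lra].
  assert ((B - A) * (B + A) = (b - a) * (b + a)) by nra.
  nra.
Qed.

Lemma psi_nonneg r u : 0 < r -> 0 <= psi r u.
Proof.
  intros Hr. unfold psi. pose proof (Sq_pos r u Hr).
  apply Rdiv_le_0_compat; [apply pow2_ge_0 | lra].
Qed.

Lemma psi_mono r a b : 0 < r -> 0 <= a <= b -> psi r b <= psi r a.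
Proof.
  intros Hr Hab. unfold psi. pose proof (Sq_mono r a b Hr Hab).
  destruct (Sq_ge r a Hr) as [Ha1 Ha2]; try lra.
  destruct (Sq_ge r b Hr) as [Hb1 Hb2]; try lra.
  pose proof (Sq_sq r a Hr). pose proof (Sq_sq r b Hr).
  pose proof (Sq_pos r a Hr). pose proof (Sq_pos r b Hr).
  assert (Sq r a <= Sq r b) by (unfold Sq; apply sqrt_le_1; simpl; nra).
  set (A := Sq r a) in *. set (B := Sq r b) in *.
  apply Rle_trans with ((A - a) ^ 2 / B).
  - unfold Rdiv. apply Rmult_le_compat_r. left; apply Rinv_0_lt_compat; lra. simpl; nra.
  - unfold Rdiv. apply Rmult_le_compat_l. apply pow2_ge_0.
    apply Rinv_le_contravar; lra.
Qed.

Lemma psi_u2 r u : 0 < r -> 0 <= u -> psi r u * u ^ 2 <= r * sqrt r / 4.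
Proof.
  intros Hr Hu. unfold psi.
  destruct (Sq_ge r u Hr) as [H1 H2]; try lra.
  pose proof (Sq_sq r u Hr). pose proof (Sq_pos r u Hr).
  pose proof (sqrt_lt_R0 r Hr) as Hq0. pose proof (sqrt_sqrt r (Rlt_le _ _ Hr)) as Hqq.
  set (S := Sq r u) in *. set (q := sqrt r) in *.
  assert (Hk : u * (S - u) * (S + u) = r * u) by (simpl in *; nra).
  assert (u * (S - u) <= r / 2).
  { assert (u * (S - u) * (S + u) <= r / 2 * (S + u)) by nra. 
    apply Rmult_le_reg_r with (S + u); lra. }
  assert (0 <= u * (S - u)) by nra.
  assert ((u * (S - u)) ^ 2 <= r * r / 4) by nra.
  replace ((S - u) ^ 2 / S * u ^ 2) with ((u * (S - u)) ^ 2 / S) by (field; lra).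
  replace (r * q / 4) with (r * (q * q) / 4 / q) by (field; lra). rewrite Hqq.
  apply Rle_trans with (r * r / 4 / S).
  - unfold Rdiv. apply Rmult_le_compat_r. left; apply Rinv_0_lt_compat; lra. lra.
  - unfold Rdiv. apply Rmult_le_compat_l. nra. apply Rinv_le_contravar; lra.
Qed.

Lemma Q_ident r u : 0 < r -> (2 * u ^ 2 + r) / Sq r u = 2 * u + psi r u.
Proof.
  intros Hr. unfold psi. pose proof (Sq_sq r u Hr). pose proof (Sq_pos r u Hr).
  set (S := Sq r u) in *.
  assert (E : 2 * u ^ 2 + r = 2 * u * S + (S - u) ^ 2) by (simpl in *; nra).
  rewrite E. field. lra.
Qed.

Lemma phi_bound r u : 0 < r -> 0 <= u ->
  0 <= u - u ^ 2 / Sq r u <= r * u / (u ^ 2 + r).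
Proof.
  intros Hr Hu.
  destruct (Sq_ge r u Hr) as [H1 H2]; try lra.
  pose proof (Sq_sq r u Hr). pose proof (Sq_pos r u Hr).
  set (S := Sq r u) in *.
  assert (Hx : u - u ^ 2 / S = u * (S - u) / S) by (field; lra).
  rewrite Hx. rewrite <- H. split.
  - apply Rdiv_le_0_compat; nra.
  - assert (Hr' : r = (S - u) * (S + u)) by (simpl in *; nra).
    replace (u * (S - u) / S) with (u * (S - u) * S / (S * S)) by (field; lra).
    unfold Rdiv. apply Rmult_le_compat_r. left; apply Rinv_0_lt_compat; nra.
    rewrite Hr'. nra.
Qed.

Lemma exR_of_cont (f : R -> R) : (forall x, continuous f x) -> ex_RInt f 0 (PI/2).
Proof. intros H. apply (@ex_RInt_continuous R_CompleteNormedModule). intros; apply H. Qed.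

Lemma cont_psi_sin r : 0 < r -> forall x, continuous (fun t => psi r (sin t)) x.
Proof.
  intros Hr x. unfold psi, Sq. cont. pose proof (pow2_ge_0 (sin x)); simpl in *;
    repeat split; try apply Rgt_not_eq; try apply sqrt_lt_R0; nra.
Qed.
Lemma cont_psi_cos r : 0 < r -> forall x, continuous (fun t => psi r (sin t) * cos t) x.
Proof.
  intros Hr x. unfold psi, Sq. cont. pose proof (pow2_ge_0 (sin x)); simpl in *;
    repeat split; try apply Rgt_not_eq; try apply sqrt_lt_R0; nra.
Qed.
Lemma cont_psi_lin r : 0 < r -> forall x, continuous (fun t => psi r (11/20 * t)) x.
Proof.
  intros Hr x. unfold psi, Sq. cont. pose proof (pow2_ge_0 (11/20 * x)); simpl in *;
    repeat split; try apply Rgt_not_eq; try apply sqrt_lt_R0; nra.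
Qed.
Lemma cont_f r : 0 < r -> forall x, continuous (fun t => sin t ^ 2 / Sq r (sin t)) x.
Proof.
  intros Hr x. unfold Sq. cont. pose proof (pow2_ge_0 (sin x)); simpl in *;
    repeat split; try apply Rgt_not_eq; try apply sqrt_lt_R0; nra.
Qed.
Lemma cont_log r : 0 < r -> forall x, continuous (fun t => r * sin t / (sin t ^ 2 + r)) x.
Proof.
  intros Hr x. cont. pose proof (pow2_ge_0 (sin x)); simpl in *;
    repeat split; try apply Rgt_not_eq; try apply sqrt_lt_R0; nra.
Qed.
Lemma cont_sin : forall x, continuous sin x.
Proof. intros x. cont. auto. Qed.

Lemma RInt_le' (f g : R -> R) :
  ex_RInt f 0 (PI/2) -> ex_RInt g 0 (PI/2) ->
  (forall x, 0 <= x <= PI/2 -> f x <= g x) -> RInt f 0 (PI/2) <= RInt g 0 (PI/2).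
Proof.
  intros. apply RInt_le; auto. apply PI2_pos. intros; apply H1; lra.
Qed.

Lemma RInt_plus_const (f : R -> R) k :
  ex_RInt f 0 (PI/2) -> RInt (fun t => f t + k) 0 (PI/2) = RInt f 0 (PI/2) + PI / 2 * k.
Proof.
  intros Hf. 
  rewrite (RInt_plus f (fun _ => k)); auto. 2: apply ex_RInt_const.
  rewrite RInt_const. unfold plus, scal; simpl. unfold mult; simpl. ring.
Qed.

Lemma RInt_minus' (f g : R -> R) :
  ex_RInt f 0 (PI/2) -> ex_RInt g 0 (PI/2) ->
  RInt (fun t => f t - g t) 0 (PI/2) = RInt f 0 (PI/2) - RInt g 0 (PI/2).
Proof.
  intros Hf Hg. rewrite (RInt_minus f g); auto.
Qed.

Definition hR r := RInt (fun t => psi r (sin t)) 0 (PI/2).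
Definition fR r := RInt (fun t => sin t ^ 2 / Sq r (sin t)) 0 (PI/2).
Definition Blog r := r * (ln (sqrt (1+r) + 1) - ln (sqrt (1+r) - 1)) / (2 * sqrt (1+r)).

Lemma cos_01 x : 0 <= x <= PI/2 -> 0 <= cos x <= 1.
Proof. intros. split. apply cos_ge_0; lra. apply COS_bound. Qed.
Lemma sin_01 x : 0 <= x <= PI/2 -> 0 <= sin x <= 1.
Proof. intros. pose proof PI_RGT_0. split. apply sin_ge_0; lra. apply SIN_bound. Qed.

Lemma hR_lb r : 0 < r -> sqrt (1+r) - 1 <= hR r.
Proof.
  intros Hr. rewrite <- int_psicos by auto. unfold hR.
  apply RInt_le'; try apply exR_of_cont; auto using cont_psi_cos, cont_psi_sin.
  intros x Hx. pose proof (cos_01 x Hx). pose proof (psi_nonneg r (sin x) Hr). nra.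
Qed.

Lemma hR_ub1 r : 0 < r -> hR r <= 20/11 * (sqrt (1+r) - 1).
Proof.
  intros Hr. unfold hR. pose proof PI_lt_347. pose proof PI_RGT_0.
  eapply Rle_trans.
  - apply (RInt_le' _ (fun t => psi r (11/20 * t))); try apply exR_of_cont;
      auto using cont_psi_lin, cont_psi_sin.
    intros x Hx. apply psi_mono; auto. pose proof (sin_lin x Hx). lra.
  - rewrite int_psilin by auto.
    pose proof (Sq_mono r (11/20 * (PI/2)) 1 Hr) as Hm. 
    destruct (Sq_ge r 1 Hr) as [Hs1 _]; try lra.
    assert (Ha : Sq r 1 - 1 <= Sq r (11 / 20 * (PI / 2)) - 11 / 20 * (PI / 2)) by (apply Hm; lra).
    assert (Hb : (Sq r 1 - 1)^2 <= (Sq r (11 / 20 * (PI / 2)) - 11 / 20 * (PI / 2))^2) by (simpl; nra).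
    assert (Hc : Sq r 1 = sqrt (1 + r)) by (unfold Sq; f_equal; ring).
    destruct (sqrt1r r Hr) as [_ Hc2].
    rewrite Hc in Hb. simpl in *. nra.
Qed.

Lemma hR_ub2 r : 0 < r -> hR r <= sqrt (1+r) - 1 + PI / 2 * (r * sqrt r / 4).
Proof.
  intros Hr. rewrite <- int_psicos by auto. unfold hR.
  rewrite <- RInt_plus_const by (apply exR_of_cont; auto using cont_psi_cos).
  apply RInt_le'; try apply exR_of_cont; auto using cont_psi_sin.
  - intros x. unfold psi, Sq. cont. pose proof (pow2_ge_0 (sin x)); simpl in *;
    repeat split; try apply Rgt_not_eq; try apply sqrt_lt_R0; nra.
  - intros x Hx. pose proof (cos_01 x Hx). pose proof (sin_01 x Hx).
    pose proof (psi_nonneg r (sin x) Hr). pose proof (psi_u2 r (sin x) Hr ltac:(lra)).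
    pose proof (sin2_cos2 x). unfold Rsqr in *.
    assert (1 - cos x <= sin x ^ 2) by (simpl; nra).
    assert (psi r (sin x) * (1 - cos x) <= psi r (sin x) * sin x ^ 2) by nra.
    nra.
Qed.

Lemma fR_bounds r : 0 < r -> 1 - Blog r <= fR r <= 1.
Proof.
  intros Hr. unfold fR.
  assert (Hc : forall x, continuous (fun t => sin t - sin t ^ 2 / Sq r (sin t)) x).
  { intros x. unfold Sq. cont. pose proof (pow2_ge_0 (sin x)); simpl in *;
    repeat split; try apply Rgt_not_eq; try apply sqrt_lt_R0; nra. }
  assert (E : RInt (fun t => sin t ^ 2 / Sq r (sin t)) 0 (PI / 2) =
              RInt sin 0 (PI/2) - RInt (fun t => sin t - sin t ^ 2 / Sq r (sin t)) 0 (PI/2)).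
  { rewrite RInt_minus'; try apply exR_of_cont; auto using cont_sin, cont_f. simpl; lra. 
  }
  rewrite E, int_sin. split.
  - unfold Blog. rewrite <- int_log by auto.
    assert (RInt (fun t => sin t - sin t ^ 2 / Sq r (sin t)) 0 (PI / 2) <=
            RInt (fun t => r * sin t / (sin t ^ 2 + r)) 0 (PI / 2)); [|lra].
    apply RInt_le'; try apply exR_of_cont; auto using cont_log.
    intros x Hx. pose proof (sin_01 x Hx). apply phi_bound; auto; lra.
  - assert (0 <= RInt (fun t => sin t - sin t ^ 2 / Sq r (sin t)) 0 (PI / 2)); [|lra].
    apply RInt_ge_0. apply PI2_pos. apply exR_of_cont; auto.
    intros x Hx. pose proof (sin_01 x ltac:(lra)). apply phi_bound; auto; lra.
Qed.

Lemma Rint_ext_RInt (f g : R -> R) :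
  (forall x, 0 <= x <= PI/2 -> f x = g x) -> (forall x, continuous g x) ->
  Rint f 0 (PI/2) = RInt g 0 (PI/2).
Proof.
  intros Hfg Hg. pose proof PI_RGT_0.
  assert (Hexg : ex_RInt g 0 (PI/2)) by (apply exR_of_cont; auto).
  assert (Hexf : ex_RInt f 0 (PI/2)).
  { apply (ex_RInt_ext g). intros x Hx. rewrite Rmin_left, Rmax_right in Hx by lra.
    symmetry; apply Hfg; lra. auto. }
  rewrite Rint_RInt by auto. apply RInt_ext. intros x Hx.
  rewrite Rmin_left, Rmax_right in Hx by lra. apply Hfg; lra.
Qed.

Lemma RInt_lin (f g : R -> R) a b :
  ex_RInt f 0 (PI/2) -> ex_RInt g 0 (PI/2) ->
  RInt (fun t => a * f t + b * g t) 0 (PI/2) = a * RInt f 0 (PI/2) + b * RInt g 0 (PI/2).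
Proof.
  intros [If Hf] [Ig Hg].
  rewrite (is_RInt_unique f _ _ If Hf), (is_RInt_unique g _ _ Ig Hg).
  pose proof (is_RInt_scal f 0 (PI/2) a If Hf) as H1.
  pose proof (is_RInt_scal g 0 (PI/2) b Ig Hg) as H2.
  pose proof (is_RInt_plus _ _ _ _ _ _ H1 H2) as H3.
  change (is_RInt (fun t => a * f t + b * g t) 0 (PI/2) (a * If + b * Ig)) in H3.
  apply is_RInt_unique. exact H3.
Qed.

Definition Pv m s := Rint (fun th => m * sin th ^ 2 / sqrt (m ^ 2 * sin th ^ 2 + s)) 0 (PI/2).
Definition Qv m s := Rint (fun th => (2 * m ^ 2 * sin th ^ 2 + s) / sqrt (m ^ 2 * sin th ^ 2 + s)) 0 (PI/2).

Lemma psi1_eq a s : psi1 a s = Cscale (Pv (Defs.Cmod a) s) (phase a).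
Proof. reflexivity. Qed.
Lemma psi2_eq a s d w : psi2 a s d w = 4 / d * (Defs.Cmod a ^ 2 + s + 1 - Qv (Defs.Cmod a) s) + 4 * w.
Proof. reflexivity. Qed.

Lemma sqrt_fact m s u : 0 < m -> 0 < s ->
  sqrt (m ^ 2 * u ^ 2 + s) = m * Sq (s / m ^ 2) u.
Proof.
  intros Hm Hs. unfold Sq.
  replace (m ^ 2 * u ^ 2 + s) with (m ^ 2 * (u ^ 2 + s / m ^ 2)) by (field; lra).
  rewrite sqrt_mult. rewrite sqrt_pow2 by lra. reflexivity.
  apply pow2_ge_0. pose proof (pow2_ge_0 u). assert (0 < s / m^2) by (apply Rdiv_lt_0_compat; nra). lra.
Qed.

Lemma Pv_pos m s : 0 < m -> 0 < s -> Pv m s = fR (s / m ^ 2).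
Proof.
  intros Hm Hs. unfold Pv, fR. assert (Hr : 0 < s / m ^ 2) by (apply Rdiv_lt_0_compat; nra).
  apply Rint_ext_RInt; [|apply cont_f; auto].
  intros x _. rewrite sqrt_fact by auto. pose proof (Sq_pos (s/m^2) (sin x) Hr). field. lra.
Qed.

Lemma Pv_s0 m : 0 < m -> Pv m 0 = 1.
Proof.
  intros Hm. unfold Pv. rewrite <- int_sin. apply Rint_ext_RInt; [|apply cont_sin].
  intros x Hx. destruct (sin_01 x Hx) as [H0 H1].
  replace (m ^ 2 * sin x ^ 2 + 0) with ((m * sin x) ^ 2) by ring.
  rewrite sqrt_pow2 by nra. destruct (Req_dec (sin x) 0) as [E|E].
  - rewrite E. unfold Rdiv. simpl. ring.
  - field. split; lra.
Qed.

Lemma Qv_s0 m : 0 < m -> Qv m 0 = 2 * m.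
Proof.
  intros Hm. unfold Qv.
  rewrite (Rint_ext_RInt _ (fun t => (2 * m) * sin t + 0 * sin t)).
  - rewrite RInt_lin by (apply exR_of_cont; auto using cont_sin). rewrite int_sin. ring.
  - intros x Hx. destruct (sin_01 x Hx) as [H0 H1].
    replace (m ^ 2 * sin x ^ 2 + 0) with ((m * sin x) ^ 2) by ring.
    rewrite sqrt_pow2 by nra. destruct (Req_dec (sin x) 0) as [E|E].
    + rewrite E. unfold Rdiv. simpl. ring.
    + field. split; lra.
  - intros x. cont. auto.
Qed.

Lemma Qv_m0 s : 0 <= s -> Qv 0 s = PI / 2 * sqrt s.
Proof.
  intros Hs. unfold Qv.
  rewrite (Rint_ext_RInt _ (fun t => sqrt s * 1 + 0 * sin t)).
  - rewrite RInt_lin by (apply exR_of_cont; auto using cont_sin; intros; apply continuous_const).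
    rewrite RInt_const. unfold scal; simpl; unfold mult; simpl. ring.
  - intros x _. replace (2 * 0 ^ 2 * sin x ^ 2 + s) with s by ring.
    replace (0 ^ 2 * sin x ^ 2 + s) with s by ring.
    destruct (Req_dec s 0) as [E|E].
    + subst. rewrite sqrt_0. unfold Rdiv. ring.
    + pose proof (sqrt_lt_R0 s ltac:(lra)). pose proof (sqrt_sqrt s Hs).
      field_simplify; try lra. rewrite <- H0 at 1. field. lra.
  - intros x. cont. auto.
Qed.

Lemma Qv_pos m s : 0 < m -> 0 < s -> Qv m s = m * (2 + hR (s / m ^ 2)).
Proof.
  intros Hm Hs. unfold Qv, hR. assert (Hr : 0 < s / m ^ 2) by (apply Rdiv_lt_0_compat; nra).
  rewrite (Rint_ext_RInt _ (fun t => (2 * m) * sin t + m * psi (s / m ^ 2) (sin t))).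
  - rewrite RInt_lin by (apply exR_of_cont; auto using cont_sin, cont_psi_sin).
    rewrite int_sin. ring.
  - intros x _. rewrite sqrt_fact by auto. 
    pose proof (Q_ident (s/m^2) (sin x) Hr) as Q.
    pose proof (Sq_pos (s/m^2) (sin x) Hr).
    transitivity (m * ((2 * sin x ^ 2 + s / m ^ 2) / Sq (s / m ^ 2) (sin x))).
    + field. lra.
    + rewrite Q. ring.
  - intros x. apply (@continuous_plus R_UniformSpace R_AbsRing R_NormedModule).
    + cont. auto.
    + unfold psi, Sq. cont. pose proof (pow2_ge_0 (sin x)). simpl in *.
      repeat split; try apply Rgt_not_eq; try apply sqrt_lt_R0; nra.
Qed.

Definition Dv m s := m ^ 2 + s + 1 - Qv m s.

Lemma D_nonneg m s : 0 <= m -> 0 <= s -> 0 <= Dv m s /\ (Dv m s = 0 -> m = 1 /\ s = 0).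
Proof.
  intros Hm Hs. unfold Dv. pose proof PI_lt_347. pose proof PI_RGT_0.
  destruct (Req_dec m 0) as [E|E].
  - subst. rewrite Qv_m0 by auto.
    pose proof (sqrt_pos s) as Hq0. pose proof (sqrt_sqrt s Hs) as Hqq.
    set (q := sqrt s) in *. assert (Hpos : 0 < q * q - PI / 2 * q + 1).
    { destruct (Req_dec q 0) as [Eq|Eq]. rewrite Eq. lra.
      assert (0 < q) by (destruct (Rle_lt_or_eq_dec 0 q Hq0); [auto | congruence]).
      assert (0 < q * (2 - PI/2)) by (apply Rmult_lt_0_compat; lra).
      assert (q*q - PI/2*q + 1 = (q-1)*(q-1) + q*(2-PI/2)) as -> by ring.
      pose proof (Rle_0_sqr (q-1)). unfold Rsqr in *. lra. }
    rewrite <- Hqq. simpl. split. lra. intros. lra.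
  - assert (Hm' : 0 < m) by (destruct (Rle_lt_or_eq_dec 0 m Hm); [auto | congruence]). destruct (Req_dec s 0) as [Es|Es].
    + subst. rewrite Qv_s0 by auto. split. pose proof (Rle_0_sqr (m-1)); unfold Rsqr in *; simpl; lra. intros HD. split; [|auto].
      assert (HH : (m - 1) * (m - 1) = 0) by (simpl in HD; lra).
      apply Rmult_integral in HH. lra.
    + assert (Hs' : 0 < s) by (destruct (Rle_lt_or_eq_dec 0 s Hs); [auto | congruence]). rewrite Qv_pos by auto.
      assert (Hr : 0 < s / m ^ 2) by (apply Rdiv_lt_0_compat; nra).
      pose proof (hR_ub1 _ Hr). destruct (sqrt1r _ Hr) as [Hc1 Hc2].
      set (r := s / m ^ 2) in *. set (c := sqrt (1 + r)) in *.
      assert (Hsr : s = m ^ 2 * r) by (unfold r; field; lra).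
      assert (m ^ 2 + s + 1 - m * (2 + hR r) >= (m * c - 1) ^ 2 + m * (c - 1) * (2 - 20/11)).
      { rewrite Hsr. simpl in *. nra. }
      assert (0 < m * (c - 1) * (2 - 20/11)) by nra.
      pose proof (pow2_ge_0 (m*c-1)). split. lra. intros. exfalso; lra.
Qed.

Lemma D_lower m s q : 0 < q <= 1/2 -> 1 - q/2 < m -> 0 < s < q^2/2 ->
  Dv m s > (1/2 - q) * s.
Proof.
  intros Hq Hm Hs. unfold Dv. pose proof PI_lt_347. pose proof PI_RGT_0.
  assert (Hm' : 0 < m) by lra.
  rewrite Qv_pos by lra.
  assert (Hr : 0 < s / m ^ 2) by (apply Rdiv_lt_0_compat; nra).
  pose proof (hR_ub2 _ Hr). destruct (sqrt1r _ Hr) as [Hc1 Hc2].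
  set (r := s / m ^ 2) in *. set (c := sqrt (1 + r)) in *.
  assert (Hsr : s = m ^ 2 * r) by (unfold r; field; lra).
  assert (Hc : c - 1 <= r / 2) by nra.
  pose proof (sqrt_lt_R0 r Hr). pose proof (sqrt_sqrt r (Rlt_le _ _ Hr)).
  assert (Hrq : r < q ^ 2).
  { assert (m ^ 2 > 1/2) by nra. 
    assert (r * m ^ 2 < q ^ 2 / 2) by (rewrite Rmult_comm, <- Hsr; lra). nra. }
  assert (Hsq : sqrt r < q).
  { apply Rnot_le_lt. intros Hle. assert (q * q <= sqrt r * sqrt r) by nra. simpl in *; nra. }
  assert (hR r < r / 2 + q * r / 2).
  { assert (PI / 2 * (r * sqrt r / 4) < q * r / 2).
    { assert (r * sqrt r < r * q) by nra. assert (0 < r * sqrt r) by (apply Rmult_lt_0_compat; lra).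
      assert (PI * (r*sqrt r) < 4 * (r*sqrt r)) by (apply Rmult_lt_compat_r; lra). lra. }
    lra. }
  rewrite Hsr. simpl in *.
  assert (m * (1 / 2 + q) >= (1 + q) / 2) by nra.
  assert (m * hR r < m * (r/2 + q*r/2)) by (apply Rmult_lt_compat_l; lra).
  assert (0 <= (m * r) * (m * (1/2 + q) - (1 + q) / 2)) by (apply Rmult_le_pos; nra).
  pose proof (Rle_0_sqr (m-1)). unfold Rsqr in *. nra.
Qed.

Lemma D_upper m s : 0 < m <= 1 -> 0 < s ->
  Dv m s <= (1 - m) ^ 2 + s * (1/2 + s / m ^ 2 / 8).
Proof.
  intros Hm Hs. unfold Dv.
  rewrite Qv_pos by lra.
  assert (Hr : 0 < s / m ^ 2) by (apply Rdiv_lt_0_compat; nra).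
  pose proof (hR_lb _ Hr). destruct (sqrt1r _ Hr) as [Hc1 Hc2].
  set (r := s / m ^ 2) in *. set (c := sqrt (1 + r)) in *.
  assert (Hsr : s = m ^ 2 * r) by (unfold r; field; lra).
  assert (Hc : c - 1 <= r / 2) by nra.
  assert (Hc' : c - 1 = r / (c + 1)).
  { assert (Hrc : r = c * c - 1) by lra. rewrite Hrc. field. lra. }
  assert (m * (c - 1) >= s / (c + 1)).
  { rewrite Hc', Hsr. unfold Rdiv. 
    assert (m * r >= m ^ 2 * r) by (simpl; nra).
    apply Rle_ge. rewrite <- Rmult_assoc. apply Rmult_le_compat_r.
    left; apply Rinv_0_lt_compat; lra. lra. }
  assert (s / (c + 1) >= s * (1/2 - r / 8)).
  { unfold Rdiv. apply Rle_ge. apply Rmult_le_compat_l. lra.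
    apply Rmult_le_reg_r with (c + 1). lra. rewrite Rinv_l by lra. nra. }
  assert (m ^ 2 + s + 1 - m * (2 + hR r) <= (1 - m)^2 + s - m * (c - 1)) by nra.
  lra.
Qed.

Lemma ln_le w : 0 < w -> ln w <= w - 1.
Proof.
  intros Hw. destruct (Req_dec (w - 1) 0) as [E|E].
  - replace w with 1 by lra. rewrite ln_1. lra.
  - pose proof (exp_ineq1 _ E). rewrite <- (exp_ln w Hw) in H at 1.
    left. apply exp_lt_inv. lra.
Qed.

Lemma Blog_bound r : 0 < r <= 3 -> 0 <= Blog r /\ Blog r ^ 2 <= 12 * r * sqrt r.
Proof.
  intros Hr. unfold Blog. destruct (sqrt1r r ltac:(lra)) as [Hc1 Hc2].
  set (c := sqrt (1 + r)) in *.
  assert (Hc3 : c <= 2) by nra.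
  set (y := (c + 1) / (c - 1)).
  assert (Hy1 : 1 < y) by (unfold y; apply Rlt_div_r; lra || (apply (Rmult_lt_reg_r (c-1)); try lra; unfold Rdiv; rewrite Rmult_assoc, Rinv_l; lra)).
  assert (EL : ln (c + 1) - ln (c - 1) = ln y).
  { unfold y, Rdiv. rewrite ln_mult, ln_Rinv; try lra. apply Rinv_0_lt_compat; lra. }
  rewrite EL.
  assert (HL0 : 0 <= ln y) by (rewrite <- ln_1; left; apply ln_increasing; lra).
  assert (Hry : r * y = (c + 1) ^ 2).
  { unfold y. replace r with ((c - 1) * (c + 1)) at 1 by nra. field. lra. }
  set (w := sqrt (sqrt y)).
  assert (Hsy : 0 < sqrt y) by (apply sqrt_lt_R0; lra).
  assert (Hw : 0 < w) by (apply sqrt_lt_R0; lra).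
  assert (Hww : w * w = sqrt y) by (apply sqrt_sqrt; lra).
  assert (Hyy : sqrt y * sqrt y = y) by (apply sqrt_sqrt; lra).
  assert (HLw : ln y = 4 * ln w).
  { rewrite <- Hyy, <- Hww. rewrite !ln_mult; try lra; try nra. }
  pose proof (ln_le w Hw).
  assert (HL : ln y <= 4 * w) by lra.
  assert (HL2 : ln y ^ 2 <= 16 * sqrt y) by (simpl; nra).
  pose proof (sqrt_lt_R0 r ltac:(lra)) as Hsr. pose proof (sqrt_sqrt r ltac:(lra)) as Hrr.
  assert (Hrsy : r * sqrt y <= 3 * sqrt r).
  { assert ((r * sqrt y) * (r * sqrt y) <= (3 * sqrt r) * (3 * sqrt r)).
    { replace ((r * sqrt y) * (r * sqrt y)) with (r * r * (sqrt y * sqrt y)) by ring. rewrite Hyy.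
      replace ((3 * sqrt r) * (3 * sqrt r)) with (9 * (sqrt r * sqrt r)) by ring. rewrite Hrr.
      replace (r * r * y) with (r * (r * y)) by ring.
      rewrite Hry. simpl. nra. }
    assert (0 <= r * sqrt y) by nra. nra. }
  split.
  - apply Rdiv_le_0_compat; nra.
  - assert (E : (r * ln y / (2 * c)) ^ 2 = r ^ 2 * ln y ^ 2 / (4 * c ^ 2)) by (field; lra).
    rewrite E. 
    apply Rle_trans with (r ^ 2 * ln y ^ 2 / 4).
    + unfold Rdiv. apply Rmult_le_compat_l. nra.
      apply Rinv_le_contravar; simpl; nra.
    + assert (r ^ 2 * ln y ^ 2 <= r ^ 2 * (16 * sqrt y)) by (apply Rmult_le_compat_l; nra).
      simpl in *. nra.
Qed.

End Aux.
Import Aux.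

Lemma Cmod_nonneg z : 0 <= Cmod z.
Proof. unfold Cmod. apply sqrt_pos. Qed.

Lemma Cmod_scale k z : Cmod (Cscale k z) = Rabs k * Cmod z.
Proof.
  destruct z as [x y]. unfold Cmod, Cscale; cbn [fst snd].
  replace ((k * x) ^ 2 + (k * y) ^ 2) with (k ^ 2 * (x ^ 2 + y ^ 2)) by ring.
  rewrite sqrt_mult_alt by apply pow2_ge_0. f_equal.
  replace (k ^ 2) with (Rsqr k) by (unfold Rsqr; ring). apply sqrt_Rsqr_abs.
Qed.

Lemma Cmod_phase z : Cmod (phase z) = 1.
Proof.
  unfold phase. destruct (Req_EM_T (Cmod z) 0) as [E|E].
  - unfold Cmod; cbn [fst snd]. replace (1 ^ 2 + 0 ^ 2) with 1 by ring. apply sqrt_1.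
  - destruct z as [x y]. unfold Cmod in *; cbn [fst snd] in *.
    pose proof (sqrt_pos (x ^ 2 + y ^ 2)).
    assert (Hq : sqrt (x ^ 2 + y ^ 2) * sqrt (x ^ 2 + y ^ 2) = x ^ 2 + y ^ 2)
      by (apply sqrt_sqrt; pose proof (pow2_ge_0 x); pose proof (pow2_ge_0 y); lra).
    set (M := sqrt (x ^ 2 + y ^ 2)) in *.
    replace ((x / M) ^ 2 + (y / M) ^ 2) with 1. apply sqrt_1.
    field_simplify; auto. rewrite <- Hq. field. auto.
Qed.

Lemma Cmod_sub_ge z : Rabs (Cmod z - 1) <= Cmod (Csub z (1, 0)).
Proof.
  destruct z as [x y]. unfold Cmod, Csub; cbn [fst snd].
  pose proof (pow2_ge_0 x); pose proof (pow2_ge_0 y).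
  pose proof (sqrt_pos (x ^ 2 + y ^ 2)).
  assert (Hq : sqrt (x ^ 2 + y ^ 2) * sqrt (x ^ 2 + y ^ 2) = x ^ 2 + y ^ 2) by (apply sqrt_sqrt; lra).
  set (M := sqrt (x ^ 2 + y ^ 2)) in *.
  assert (HxM : x <= M).
  { destruct (Rle_or_lt x 0). lra. apply Rnot_lt_le. intros Hlt. 
    assert (M * M < x * x) by nra. simpl in *. nra. }
  rewrite <- sqrt_Rsqr_abs. apply sqrt_le_1_alt. unfold Rsqr. simpl in *. nra.
Qed.

Lemma Cmod_eq0 z : Cmod z = 0 -> z = (0, 0).
Proof.
  destruct z as [x y]. unfold Cmod; simpl. intros H.
  pose proof (pow2_ge_0 x); pose proof (pow2_ge_0 y).
  apply sqrt_eq_0 in H; [|lra]. f_equal; simpl in *; nra.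
Qed.

Lemma Cmod_real m : 0 <= m -> Cmod (m, 0) = m.
Proof.
  intros. unfold Cmod; simpl. replace (m * (m * 1) + 0 * (0 * 1)) with (m ^ 2) by ring.
  apply sqrt_pow2; auto.
Qed.

Lemma Cmod_sub_real m : Cmod (Csub (m, 0) (1, 0)) = Rabs (m - 1).
Proof.
  unfold Cmod, Csub; cbn [fst snd]. replace ((m - 1) ^ 2 + (0 - 0) ^ 2) with (Rsqr (m - 1))
    by (unfold Rsqr; ring). apply sqrt_Rsqr_abs.
Qed.

Lemma phase_real m : 0 < m -> phase (m, 0) = (1, 0).
Proof.
  intros Hm. unfold phase. rewrite Cmod_real by lra.
  destruct (Req_EM_T m 0). lra. simpl. f_equal; field; lra.
Qed.

Lemma phase_unit z : Cmod z = 1 -> phase z = z.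
Proof.
  intros H. unfold phase. rewrite H. destruct (Req_EM_T 1 0). lra.
  destruct z; simpl. f_equal; field.
Qed.

Lemma Cscale_1 z : Cscale 1 z = z.
Proof. destruct z; unfold Cscale; simpl; f_equal; ring. Qed.

Lemma se_S d w a0 s0 t : se d w a0 s0 (S t) =
  (psi1 (fst (se d w a0 s0 t)) (snd (se d w a0 s0 t)),
   psi2 (fst (se d w a0 s0 t)) (snd (se d w a0 s0 t)) d w).
Proof. reflexivity. Qed.

Lemma psi2_D a s d : psi2 a s d 0 = 4 / d * Dv (Cmod a) s.
Proof. rewrite psi2_eq. unfold Dv. ring. Qed.

Lemma fix_step a : Cmod a = 1 -> psi1 a 0 = a.
Proof.
  intros H. rewrite psi1_eq, H, Pv_s0 by lra. rewrite phase_unit by auto. apply Cscale_1.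
Qed.

Lemma partB (delta : R) : 0 < delta < 2 ->
  forall (a0 : Cpx) (s0 : R), 0 <= s0 ->
    Un_cv (fun t => Cmod (Csub (fst (se delta 0 a0 s0 t)) (1, 0))) 0 ->
    Un_cv (fun t => snd (se delta 0 a0 s0 t)) 0 ->
    a0 = (1, 0) /\ s0 = 0.
Proof.
  intros Hd a0 s0 Hs0 HcA HcS.
  set (A := fun t => fst (se delta 0 a0 s0 t)) in *.
  set (Sg := fun t => snd (se delta 0 a0 s0 t)) in *.
  assert (HS : forall t, Sg (S t) = 4 / delta * Dv (Cmod (A t)) (Sg t)).
  { intros t. unfold Sg, A. rewrite se_S. simpl. apply psi2_D. }
  assert (HA : forall t, A (S t) = psi1 (A t) (Sg t)).
  { intros t. unfold Sg, A. rewrite se_S. reflexivity. }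
  assert (Hd4 : 0 < 4 / delta) by (apply Rdiv_lt_0_compat; lra).
  assert (Hnn : forall t, 0 <= Sg t).
  { induction t. simpl. auto. rewrite HS.
    destruct (D_nonneg (Cmod (A t)) (Sg t) (Cmod_nonneg _) IHt). nra. }
  assert (HD0 : forall t, Sg (S t) = 0 -> Cmod (A t) = 1 /\ Sg t = 0).
  { intros t H. rewrite HS in H. apply (D_nonneg _ _ (Cmod_nonneg _) (Hnn t)).
    apply Rmult_integral in H. destruct H; [|auto]. lra. }
  set (q := (2 - delta) / 4).
  assert (Hq : 0 < q <= 1/2) by (unfold q; lra).
  destruct (HcA (q/2) ltac:(lra)) as [N1 HN1].
  destruct (HcS (q^2/2) ltac:(nra)) as [N2 HN2].
  set (N := max N1 N2).
  assert (Hm : forall n, (n >= N)%nat -> 1 - q/2 < Cmod (A n)).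
  { intros n Hn. specialize (HN1 n ltac:(lia)). unfold R_dist in HN1.
    rewrite Rminus_0_r, Rabs_pos_eq in HN1 by apply Cmod_nonneg.
    assert (Hlt : Rabs (Cmod (A n) - 1) < q / 2).
    { apply Rle_lt_trans with (1 := Cmod_sub_ge (A n)). unfold A; lra. }
    apply Rabs_def2 in Hlt. destruct Hlt. lra. }
  assert (Hs : forall n, (n >= N)%nat -> Sg n < q^2/2).
  { intros n Hn. specialize (HN2 n ltac:(lia)). unfold R_dist in HN2.
    rewrite Rminus_0_r in HN2. apply Rabs_def2 in HN2. destruct HN2. lra. }
  assert (Claim1 : forall t, (t >= N)%nat -> Sg t = 0).
  { intros t Ht. destruct (Rle_lt_or_eq_dec _ _ (Hnn t)) as [Hpos|E]; [|auto].
    exfalso.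
    assert (Hgrow : forall k, Sg t <= Sg (t + k)%nat).
    { induction k. rewrite Nat.add_0_r. lra.
      rewrite Nat.add_succ_r, HS.
      assert (Hp : 0 < Sg (t + k)%nat) by lra.
      pose proof (D_lower (Cmod (A (t + k)%nat)) (Sg (t + k)%nat) q Hq
                    (Hm (t + k)%nat ltac:(lia)) (conj Hp (Hs (t + k)%nat ltac:(lia)))).
      assert (1/2 - q = delta / 4) by (unfold q; field).
      rewrite H0 in H.
      assert (4 / delta * Dv (Cmod (A (t + k)%nat)) (Sg (t + k)%nat) >
              4 / delta * (delta / 4 * Sg (t + k)%nat)) by (apply Rmult_gt_compat_l; lra).
      replace (4 / delta * (delta / 4 * Sg (t + k)%nat)) with (Sg (t + k)%nat) in H1 by (field; lra).
      lra. }
    destruct (HcS (Sg t) Hpos) as [N3 HN3].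
    specialize (HN3 (t + N3)%nat ltac:(lia)). specialize (Hgrow N3).
    unfold R_dist in HN3. rewrite Rminus_0_r in HN3. apply Rabs_def2 in HN3.
    destruct HN3. unfold Sg in *. lra. }
  assert (Claim3 : forall k, A (N + k)%nat = A N).
  { induction k. rewrite Nat.add_0_r; auto.
    rewrite Nat.add_succ_r, HA. rewrite (Claim1 (N + k)%nat) by lia.
    destruct (HD0 (N + k)%nat (Claim1 (S (N + k)) ltac:(lia))) as [Hm1 _].
    rewrite fix_step by auto. auto. }
  assert (HAN : A N = (1, 0)).
  { assert (Cmod (Csub (A N) (1, 0)) = 0).
    { apply Rle_antisym; [|apply Cmod_nonneg]. apply Rnot_lt_le. intros Hlt.
      destruct (HcA _ Hlt) as [N4 HN4]. specialize (HN4 (N + N4)%nat ltac:(lia)).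
      unfold R_dist in HN4. rewrite Rminus_0_r in HN4. apply Rabs_def2 in HN4.
      destruct HN4 as [HN4 _]. fold (A (N + N4)%nat) in HN4. rewrite Claim3 in HN4. lra. }
    apply Cmod_eq0 in H. destruct (A N) as [x y]. unfold Csub in H; simpl in H.
    injection H; intros. f_equal; lra. }
  assert (Claim4 : forall t, A (S t) = (1, 0) -> Sg (S t) = 0 -> A t = (1, 0) /\ Sg t = 0).
  { intros t H1 H2. destruct (HD0 t H2) as [Hm1 Hs1]. split; auto.
    rewrite HA, Hs1, fix_step in H1 by auto. auto. }
  assert (Hback : forall d, (d <= N)%nat -> A (N - d)%nat = (1, 0) /\ Sg (N - d)%nat = 0).
  { induction d; intros Hd'.
    - rewrite Nat.sub_0_r. split; [exact HAN | apply Claim1; lia].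
    - destruct IHd as [I1 I2]; [lia|].
      replace (N - d)%nat with (S (N - S d)) in I1, I2 by lia.
      apply Claim4; auto. }
  destruct (Hback N (le_n _)) as [H1 H2]. rewrite Nat.sub_diag in H1, H2.
  split; auto.
Qed.

Lemma step_lyap (delta lam mu gam eta R0 m s : R) :
  2 < delta -> lam = (delta + 6) / (4 * delta) -> mu = (1 + lam) / 2 ->
  gam = 4 / (delta * mu) -> eta = (mu - lam) / (4 * gam) ->
  0 < R0 -> R0 <= (delta - 2) / 2 -> R0 <= 1/4 -> R0 <= (Rmin eta 1 / 12) ^ 2 ->
  0 < m <= 1 -> 0 <= s -> s <= R0 / 4 -> gam * (1 - m) ^ 2 <= gam / 4 ->
  0 < Pv m s <= 1 /\ 0 <= 4 / delta * Dv m s /\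
  4 / delta * Dv m s + gam * (1 - Pv m s) ^ 2 <= mu * (s + gam * (1 - m) ^ 2).
Proof.
  intros Hd Hl Hmu Hg He HR0 HR1 HR2 HR3 Hm Hs HsW HmW.
  assert (Hl1 : 0 < lam < 1).
  { rewrite Hl. split. apply Rdiv_lt_0_compat; lra.
    apply Rmult_lt_reg_r with (4 * delta). lra. unfold Rdiv. rewrite Rmult_assoc, Rinv_l; lra. }
  assert (Hmu1 : lam < mu < 1) by lra.
  assert (Hg0 : 0 < gam) by (rewrite Hg; apply Rdiv_lt_0_compat; nra).
  assert (Hgm : 4 / delta = mu * gam) by (rewrite Hg; field; lra).
  assert (He0 : 0 < eta) by (rewrite He; apply Rdiv_lt_0_compat; lra).
  assert (He4 : 4 * gam * eta = mu - lam) by (rewrite He; field; lra).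
  assert (Hm2 : 1/2 <= m).
  { assert ((1 - m) ^ 2 <= 1/4).
    { apply Rmult_le_reg_l with gam; auto. lra. }
    simpl in *. nra. }
  assert (Hd4 : 0 < 4 / delta) by (apply Rdiv_lt_0_compat; lra).
  destruct (D_nonneg m s ltac:(lra) Hs) as [HD0 _].
  destruct (Rle_lt_or_eq_dec _ _ Hs) as [Hsp|Hs0].
  - assert (Hr : 0 < s / m ^ 2) by (apply Rdiv_lt_0_compat; nra).
    assert (Hr4 : s / m ^ 2 <= 4 * s).
    { unfold Rdiv. assert (/ m ^ 2 <= 4).
      { replace 4 with (/ (1/4)) by field. apply Rinv_le_contravar. lra. simpl; nra. }
      nra. }
    set (r := s / m ^ 2) in *.
    assert (HrR : r <= R0) by lra.
    rewrite Pv_pos by lra. fold r.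
    destruct (fR_bounds r Hr) as [Hf1 Hf2].
    destruct (Blog_bound r ltac:(lra)) as [Hb0 Hb2].
    pose proof (sqrt_lt_R0 r Hr) as Hsq0.
    set (e := Rmin eta 1) in *.
    assert (He1 : 0 < e <= 1 /\ e <= eta).
    { unfold e. split; [split|]. apply Rmin_glb_lt; lra. apply Rmin_r. apply Rmin_l. }
    assert (Hsq : sqrt r <= e / 12).
    { rewrite <- (sqrt_pow2 (e/12)) by lra. apply sqrt_le_1_alt. lra. }
    assert (HBe : Blog r ^ 2 <= e * r).
    { apply Rle_trans with (1 := Hb2). 
      assert (12 * r * sqrt r <= 12 * r * (e / 12)) by (apply Rmult_le_compat_l; lra). lra. }
    assert (HB : Blog r ^ 2 <= eta * r) by nra.
    assert (HB2 : Blog r <= 1/2) by (simpl in *; nra).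
    assert (Hm' : (1 - fR r) ^ 2 <= Blog r ^ 2) by (simpl; nra).
    pose proof (D_upper m s ltac:(lra) Hsp) as HDu. fold r in HDu.
    assert (Hlam : 4 / delta * (1/2 + r/8) <= lam).
    { rewrite Hl. apply Rmult_le_reg_r with (4 * delta). lra.
      unfold Rdiv. field_simplify; try lra. }
    split; [lra|]. split; [nra|].
    assert (4 / delta * Dv m s <= 4 / delta * ((1 - m) ^ 2 + s * (1 / 2 + r / 8)))
      by (apply Rmult_le_compat_l; lra).
    assert (4 / delta * (s * (1 / 2 + r / 8)) <= lam * s).
    { replace (4 / delta * (s * (1 / 2 + r / 8))) with ((4 / delta * (1/2 + r/8)) * s) by ring.
      apply Rmult_le_compat_r; lra. }
    assert (gam * (1 - fR r) ^ 2 <= gam * (eta * (4 * s))).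
    { apply Rmult_le_compat_l. lra. assert (eta * r <= eta * (4 * s)) by (apply Rmult_le_compat_l; lra). lra. }
    nra.
  - subst s. rewrite Pv_s0 by lra.
    assert (Dv m 0 = (1 - m) ^ 2) by (unfold Dv; rewrite Qv_s0 by lra; ring).
    rewrite H. split; [lra|]. split. nra.
    rewrite Hgm. nra.
Qed.

Lemma pow_le1 x n : 0 <= x < 1 -> x ^ n <= 1.
Proof.
  intros H. destruct n. simpl; lra.
  pose proof (pow_lt_1_compat x (S n) H ltac:(lia)). lra.
Qed.

Lemma partA (delta : R) : 2 < delta ->
  exists eps1 eps2 : R, 0 < eps1 /\ 0 < eps2 /\
    forall a0 s0 : R, 1 - eps1 < a0 < 1 -> 0 < s0 < eps2 ->
      Un_cv (fun t => Cmod (Csub (fst (se delta 0 (Cofreal a0) s0 t)) (1, 0))) 0 /\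
      Un_cv (fun t => snd (se delta 0 (Cofreal a0) s0 t)) 0.
Proof.
  intros Hd.
  set (lam := (delta + 6) / (4 * delta)).
  set (mu := (1 + lam) / 2).
  set (gam := 4 / (delta * mu)).
  set (eta := (mu - lam) / (4 * gam)).
  set (R0 := Rmin (Rmin ((delta - 2) / 2) (1/4)) ((Rmin eta 1 / 12) ^ 2)).
  assert (Hl1 : 0 < lam < 1).
  { unfold lam. split. apply Rdiv_lt_0_compat; lra.
    apply Rmult_lt_reg_r with (4 * delta). lra. unfold Rdiv. rewrite Rmult_assoc, Rinv_l; lra. }
  assert (Hmu1 : 0 < mu < 1) by (unfold mu; lra).
  assert (Hg0 : 0 < gam) by (unfold gam; apply Rdiv_lt_0_compat; nra).
  assert (He0 : 0 < eta) by (unfold eta; apply Rdiv_lt_0_compat; unfold mu; lra).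
  assert (HR0 : 0 < R0).
  { unfold R0. apply Rmin_glb_lt. apply Rmin_glb_lt; lra.
    assert (0 < Rmin eta 1) by (apply Rmin_glb_lt; lra). simpl; nra. }
  assert (HR1 : R0 <= (delta - 2) / 2) by (unfold R0; eapply Rle_trans; [apply Rmin_l|apply Rmin_l]).
  assert (HR2 : R0 <= 1/4) by (unfold R0; eapply Rle_trans; [apply Rmin_l|apply Rmin_r]).
  assert (HR3 : R0 <= (Rmin eta 1 / 12) ^ 2) by (unfold R0; apply Rmin_r).
  set (W := Rmin (R0 / 4) (gam / 4)).
  assert (HW0 : 0 < W) by (unfold W; apply Rmin_glb_lt; lra).
  assert (HW1 : W <= R0 / 4) by apply Rmin_l.
  assert (HW2 : W <= gam / 4) by apply Rmin_r.
  exists (sqrt (W / (2 * gam))), (W / 2).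
  assert (He1 : 0 < sqrt (W / (2 * gam))) by (apply sqrt_lt_R0, Rdiv_lt_0_compat; lra).
  split; [auto|]. split; [lra|].
  intros a0 s0 Ha Hs.
  assert (Hsq : sqrt (W / (2 * gam)) * sqrt (W / (2 * gam)) = W / (2 * gam))
    by (apply sqrt_sqrt; apply Rlt_le, Rdiv_lt_0_compat; lra).
  assert (Hga : gam * (1 - a0) ^ 2 < W / 2).
  { assert ((1 - a0) ^ 2 < W / (2 * gam)) by (simpl; nra).
    apply Rmult_lt_compat_l with (r := gam) in H; auto.
    replace (gam * (W / (2 * gam))) with (W / 2) in H by (field; lra). auto. }
  assert (Ha0 : 0 < a0).
  { assert (gam * (1 - a0) ^ 2 < gam / 8) by lra.
    assert ((1 - a0) ^ 2 < 1 / 8) by (apply Rmult_lt_reg_l with gam; lra). simpl in *; nra. }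
  set (A := fun t => fst (se delta 0 (Cofreal a0) s0 t)).
  set (Sg := fun t => snd (se delta 0 (Cofreal a0) s0 t)).
  set (V0 := s0 + gam * (1 - a0) ^ 2).
  assert (HV0 : 0 < V0 < W) by (unfold V0; pose proof (pow2_ge_0 (1 - a0)); nra).
  assert (Inv : forall t, exists m, A t = (m, 0) /\ 0 < m <= 1 /\ 0 <= Sg t /\
                   Sg t + gam * (1 - m) ^ 2 <= mu ^ t * V0).
  { induction t.
    - exists a0. unfold A, Sg, V0; simpl. split; [reflexivity|]. split; [lra|]. split; lra.
    - destruct IHt as [m [HAm [Hm [HS HV]]]].
      assert (Hpow : mu ^ t <= 1) by (apply pow_le1; lra).
      assert (HVt : mu ^ t * V0 <= V0) by nra.
      assert (Hgm0 : 0 <= gam * (1 - m) ^ 2) by (pose proof (pow2_ge_0 (1 - m)); nra).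
      assert (Hs1 : Sg t <= R0 / 4) by lra.
      assert (Hs2 : gam * (1 - m) ^ 2 <= gam / 4) by lra.
      destruct (step_lyap delta lam mu gam eta R0 m (Sg t) Hd eq_refl eq_refl eq_refl eq_refl
                 HR0 HR1 HR2 HR3 Hm HS Hs1 Hs2) as [HP [HD HL]].
      exists (Pv m (Sg t)).
      assert (EA : A (S t) = (Pv m (Sg t), 0)).
      { unfold A. rewrite se_S. fold (A t). fold (Sg t). rewrite HAm, psi1_eq.
        rewrite Cmod_real, phase_real by lra. unfold Cscale; simpl. f_equal; ring. }
      assert (ES : Sg (S t) = 4 / delta * Dv m (Sg t)).
      { unfold Sg at 1. rewrite se_S. fold (A t). fold (Sg t). simpl snd. rewrite psi2_D, HAm.
        rewrite Cmod_real by lra. reflexivity. }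
      split; [auto|]. split; [lra|]. rewrite ES. split; [auto|].
      simpl. nra. }
  assert (Hconv : forall eps, 0 < eps -> exists N, forall n, (n >= N)%nat -> mu ^ n * V0 < eps).
  { intros eps Heps.
    destruct (pow_lt_1_zero mu ltac:(rewrite Rabs_pos_eq; lra) (eps / V0)
                ltac:(apply Rdiv_lt_0_compat; lra)) as [N HN].
    exists N. intros n Hn. specialize (HN n Hn). rewrite Rabs_pos_eq in HN by (apply pow_le; lra).
    apply Rmult_lt_compat_r with (r := V0) in HN; [|lra].
    replace (eps / V0 * V0) with eps in HN by (field; lra). auto. }
  split.
  - intros eps Heps. destruct (Hconv (gam * eps ^ 2)) as [N HN].
    { apply Rmult_lt_0_compat; [lra | simpl; nra]. }
    exists N. intros n Hn. specialize (HN n Hn).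
    destruct (Inv n) as [m [HAm [Hm [HS HV]]]].
    fold (A n). rewrite HAm, Cmod_sub_real. unfold R_dist. rewrite Rminus_0_r, Rabs_Rabsolu.
    assert (gam * (1 - m) ^ 2 < gam * eps ^ 2) by lra.
    assert ((1 - m) ^ 2 < eps ^ 2) by (apply Rmult_lt_reg_l with gam; lra).
    apply Rabs_def1; simpl in *; nra.
  - intros eps Heps. destruct (Hconv eps Heps) as [N HN].
    exists N. intros n Hn. specialize (HN n Hn).
    destruct (Inv n) as [m [HAm [Hm [HS HV]]]].
    fold (Sg n). unfold R_dist. rewrite Rminus_0_r, Rabs_pos_eq by auto.
    pose proof (pow2_ge_0 (1 - m)). nra.
Qed.


Theorem mainTheorem2 :
  forall delta : R, 0 < delta ->
    (psi1 (1, 0) 0 = (1, 0) /\ psi2 (1, 0) 0 delta 0 = 0) /\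
    (2 < delta ->
       exists eps1 eps2 : R, 0 < eps1 /\ 0 < eps2 /\
         forall a0 s0 : R, 1 - eps1 < a0 < 1 -> 0 < s0 < eps2 ->
           Un_cv (fun t => Cmod (Csub (fst (se delta 0 (Cofreal a0) s0 t)) (1, 0))) 0 /\
           Un_cv (fun t => snd (se delta 0 (Cofreal a0) s0 t)) 0) /\
    (delta < 2 ->
       forall (a0 : Cpx) (s0 : R), 0 <= s0 -> (a0, s0) <> ((0, 0), 0) ->
         Un_cv (fun t => Cmod (Csub (fst (se delta 0 a0 s0 t)) (1, 0))) 0 ->
         Un_cv (fun t => snd (se delta 0 a0 s0 t)) 0 ->
         a0 = (1, 0) /\ s0 = 0).
Proof.
  intros delta Hd. split; [split|split].
  - apply fix_step. apply Cmod_real. lra.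
  - rewrite psi2_D. rewrite Cmod_real by lra. unfold Dv. rewrite Qv_s0 by lra. field. lra.
  - apply partA.
  - intros Hd2 a0 s0 Hs0 _. apply partB; [lra|auto].
Qed.
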